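(* Let $n\in\mathbb{N}$ and let $T\subseteq\mathbb{F}_2^n$ (with $\mathbb{F}_2=\{0,1\}$). Let $C$ be the $n$-qubit projector $C=\sum_{z\in T}|z\rangle\langle z|$ onto the span of the computational basis states indexed by $T$, let $X=\sum_{j=1}^n\sigma^x_j$ where $\sigma^x_j$ is the Pauli-$X$ operator on qubit $j$, and for real angles $\beta,\gamma$ define $$|\beta,\gamma\rangle_1=e^{-i\beta X}e^{-i\gamma C}|+\rangle^{\otimes n},\qquad F_1(\beta,\gamma)=\langle\beta,\gamma|_1\,C\,|\beta,\gamma\rangle_1 .$$ Then $$F_1(\beta,\gamma)=\frac{1}{2^n}\sum_{k\in T}|c_k(\beta,\gamma)|^2,$$ where $$c_k(\beta,\gamma)=\sum_{d=0}^n\left(\#_d(k)\,(e^{-i\gamma}-1)+\binom{n}{d}\right)f_n(\beta,d),$$ with $\#_d(k)=|\{z\in T: d_H(z,k)=d\}|$, $f_n(\beta,d)=(\cos\beta)^{n-d}(-i\sin\beta)^d$, and $d_H$ the Hamming distance between bit strings.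
   Context: $T$ is the target space (set of bit strings encoding solutions of a decision problem instance); $|z\rangle$ for $z\in\mathbb{F}_2^n$ is the corresponding computational basis state, and $|+\rangle=(|0\rangle+|1\rangle)/\sqrt2$. *)

(* Defs.v *)
From mathcomp Require Import all_boot all_order all_algebra.
From mathcomp Require Import reals topology normedtype sequences trigo.
From mathcomp Require Import complex.
Import numFieldNormedType.Exports.
Set Implicit Arguments. Unset Strict Implicit. Unset Printing Implicit Defensive.
Import Order.TTheory GRing.Theory Num.Theory.
Local Open Scope ring_scope.
Local Open Scope complex_scope.

(* Bit strings z in F_2^n, i.e. functions 'I_n -> bool (qubit j <-> index j). *)
Definition bits (n : nat) := {ffun 'I_n -> bool}.

Definition hamming (n : nat) (z k : bits n) : nat := #|[set j | z j != k j]|.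

Definition flip (n : nat) (j : 'I_n) (z : bits n) : bits n :=
  [ffun i => if i == j then ~~ z i else z i].

Section Ops.
Variables (R : realType) (n : nat).
Local Notation C := (R[i]).

(* n-qubit states: vectors indexed by the computational basis (bit strings);
   operators: matrices indexed by bit strings, A x y = <x|A|y>. *)
Definition state := bits n -> C.
Definition op := bits n -> bits n -> C.

Definition idop : op := fun x y => if x == y then 1 else 0.
Definition mulop (A B : op) : op := fun x y => \sum_(z : bits n) A x z * B z y.
Definition scaleop (a : C) (A : op) : op := fun x y => a * A x y.
Definition powop (A : op) (k : nat) : op := iter k (mulop A) idop.
Definition applyop (A : op) (v : state) : state :=
  fun x => \sum_(y : bits n) A x y * v y.

Definition expop (A : op) : op := fun x y =>
  (limn (fun N => \sum_(k < N) ((powop A k x y / (k`!)%:R) : C^o)) : C).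

Definition sigmax (j : 'I_n) : op := fun x y => if x == flip j y then 1 else 0.

Definition Xop : op := fun x y => \sum_(j < n) sigmax j x y.

Definition projT (T : {set bits n}) : op :=
  fun x y => if (x == y) && (x \in T) then 1 else 0.

Definition plus_state : state := fun _ => ((Num.sqrt (2%:R ^+ n : R))^-1)%:C.

Definition ket1 (T : {set bits n}) (beta gamma : R) : state :=
  applyop (expop (scaleop (- 'i * beta%:C) Xop))
    (applyop (expop (scaleop (- 'i * gamma%:C) (projT T))) plus_state).

Definition F1 (T : {set bits n}) (beta gamma : R) : C :=
  \sum_(x : bits n) \sum_(y : bits n)
     (ket1 T beta gamma x)^* * projT T x y * ket1 T beta gamma y.

Definition expi (t : R) : C := (cos t)%:C + 'i * (sin t)%:C.

Definition ndist (T : {set bits n}) (k : bits n) (d : nat) : nat :=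
  #|[set z in T | hamming z k == d]|.

Definition fn (beta : R) (d : nat) : C :=
  ((cos beta)%:C) ^+ (n - d) * (- 'i * (sin beta)%:C) ^+ d.

Definition ck (T : {set bits n}) (beta gamma : R) (k : bits n) : C :=
  \sum_(d < n.+1)
    ((ndist T k d)%:R * (expi (- gamma) - 1) + ('C(n, d))%:R) * fn beta d.

End Ops.

(* Main.v *)
Require Import Defs.
From mathcomp Require Import all_boot all_order all_algebra.
From mathcomp Require Import reals topology normedtype sequences trigo.
From mathcomp Require Import complex.
From mathcomp Require Import all_classical.
From mathcomp Require Import ring.
Import numFieldNormedType.Exports.
Import Order.TTheory GRing.Theory Num.Theory.
Local Open Scope ring_scope.
Local Open Scope complex_scope.
Section A.
Local Open Scope classical_set_scope.
Variable R : realType.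
Local Notation C := (R[i]).

Lemma normC_real (a : R) : `|a%:C| = `|a|%:C.
Proof. by rewrite normc_def /= expr0n /= addr0 sqrtr_sqr. Qed.

Lemma cvg_realC (u : nat -> R) (a : R) : u @ \oo --> a ->
  (fun N => ((u N)%:C : C^o)) @ \oo --> ((a%:C) : C^o).
Proof.
move=> /cvgrPdist_lt H; apply/cvgrPdist_lt => e e0.
have e0' : 0 < complex.Re e by move: e0; rewrite ltcE /= => /andP[_].
have eE : e = (complex.Re e)%:C.
  by move: e0; rewrite ltcE /=; case: (e) => a' b /= /andP[/eqP -> _].
near=> N; rewrite eE -rmorphB normC_real ltcR.
by near: N; apply: H.
Unshelve. all: by end_near. Qed.

Lemma i2 : (- 'i : C) ^+ 2 = -1. Proof. by rewrite sqrrN sqr_i. Qed.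

Lemma coeff_even (t : R) (m : nat) : let k := m.*2 in
  (- 'i * t%:C) ^+ k / (k`!)%:R = (cos_coeff t k)%:C - 'i * (sin_coeff t k)%:C :> C.
Proof.
move=> k; rewrite /cos_coeff /sin_coeff /= /k odd_double doubleK /= !mul0r mul1r.
rewrite rmorph0 mulr0 subr0 exprMn -mul2n exprM i2.
rewrite !rmorphM /= fmorphV rmorphXn rmorphN1 rmorph_nat /=.
by rewrite -rmorphXn.
Qed.

Lemma coeff_odd (t : R) (m : nat) : let k := m.*2.+1 in
  (- 'i * t%:C) ^+ k / (k`!)%:R = (cos_coeff t k)%:C - 'i * (sin_coeff t k)%:C :> C.
Proof.
move=> k; rewrite /cos_coeff /sin_coeff /= /k odd_double /= !mul0r mul1r.
rewrite doubleK rmorph0 sub0r exprMn exprS -mul2n exprM i2.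
rewrite !rmorphM /= fmorphV rmorphXn rmorphN1 rmorph_nat /=.
by rewrite -rmorphXn exprS !mulNr !mulrA.
Qed.

Lemma coeff_split (t : R) (k : nat) :
  (- 'i * t%:C) ^+ k / (k`!)%:R = (cos_coeff t k)%:C - 'i * (sin_coeff t k)%:C :> C.
Proof.
rewrite -[k]odd_double_half; case: (odd k) => /=.
  by rewrite add1n coeff_odd.
by rewrite add0n coeff_even.
Qed.

Lemma cos_cvg (t : R) : series (cos_coeff t) @ \oo --> cos t.
Proof. rewrite cos.unlock; exact: is_cvg_series_cos_coeff. Qed.
Lemma sin_cvg (t : R) : series (sin_coeff t) @ \oo --> sin t.
Proof. rewrite sin.unlock; exact: is_cvg_series_sin_coeff. Qed.

Lemma expi_cvg (t : R) :
  (fun N => \sum_(k < N) (((- 'i * t%:C) ^+ k / (k`!)%:R) : C^o)) @ \oo -->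
  (expi (- t) : C^o).
Proof.
have -> : (fun N => \sum_(k < N) (((- 'i * t%:C) ^+ k / (k`!)%:R) : C^o)) =
   (fun N => ((series (cos_coeff t) N)%:C : C^o) - 'i * (series (sin_coeff t) N)%:C).
  apply/funext => N; rewrite /series /= !big_mkord.
  under eq_bigr do rewrite coeff_split.
  by rewrite sumrB -mulr_sumr !rmorph_sum.
rewrite /expi cosN sinN rmorphN mulrN.
have H1 := @cvg_realC _ _ (cos_cvg t).
have H2 : (fun N => 'i * (series (sin_coeff t) N)%:C : C^o) @ \oo --> ('i * (sin t)%:C : C^o).
  apply: cvgM; [exact: cvg_cst | exact: (@cvg_realC _ _ (sin_cvg t))].
exact: (cvgB H1 H2).
Qed.

Lemma cvg_sumC (S : finType) (f : S -> nat -> C^o) (l : S -> C^o) :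
  (forall s, f s @ \oo --> l s) ->
  (fun N => \sum_(s : S) f s N) @ \oo --> \sum_(s : S) l s.
Proof.
move=> H; apply: cvg_big => //; exact: add_continuous.
Qed.

Variable n : nat.

Lemma expop_spec (A : op R n) (S : finType) (lam : S -> C) (P : S -> op R n)
  (e : S -> C) :
  (forall k x y, powop A k x y = \sum_(s : S) lam s ^+ k * P s x y) ->
  (forall s, (fun N => \sum_(k < N) ((lam s ^+ k / (k`!)%:R) : C^o)) @ \oo
      --> (e s : C^o)) ->
  forall x y, expop A x y = \sum_(s : S) e s * P s x y.
Proof.
move=> hA he x y; rewrite /expop.
have -> : (fun N => \sum_(k < N) ((powop A k x y / (k`!)%:R) : C^o)) =
  (fun N => \sum_(s : S) (\sum_(k < N) ((lam s ^+ k / (k`!)%:R) : C^o)) * P s x y).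
  apply/funext => N.
  under eq_bigr do rewrite hA mulr_suml.
  rewrite exchange_big /=; apply: eq_bigr => s _; rewrite mulr_suml.
  by apply: eq_bigr => k _; rewrite mulrAC.
have H : (fun N => \sum_(s : S) (\sum_(k < N) ((lam s ^+ k / (k`!)%:R) : C^o)) * P s x y) @ \oo --> (\sum_(s : S) e s * P s x y : C^o).
  apply: cvg_sumC => s.
  apply: cvgM; [exact: he | exact: cvg_cst].
exact: (cvg_lim _ H).
Qed.

Lemma mulop_proj (T : {set bits n}) (c : C) (B : op R n) x y :
  mulop (scaleop c (projT R T)) B x y = if x \in T then c * B x y else 0.
Proof.
rewrite /mulop /scaleop /projT (bigD1 x) //= eqxx /= big1 ?addr0.
  by case: (x \in T); rewrite ?mulr1 ?mulr0 ?mul0r.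
by move=> z /negbTE; rewrite eq_sym => ->; rewrite /= mulr0 mul0r.
Qed.

Lemma powop_proj (T : {set bits n}) (c : C) k x y :
  powop (scaleop c (projT R T)) k x y = \sum_(b : bool)
    (if b then c else 0) ^+ k * (if b then projT R T x y else idop R x y - projT R T x y).
Proof.
rewrite big_bool /=; elim: k x y => [|k IH] x y.
  by rewrite !expr0 !mul1r addrC subrK.
rewrite /powop /= -/(powop _ k) mulop_proj IH.
rewrite [0 ^+ k.+1]expr0n /= mul0r addr0.
rewrite /projT /idop; case: (x \in T); rewrite ?andbT ?andbF.
  by rewrite subrr mulr0 addr0 exprS mulrA.
by rewrite mulr0.
Qed.

Lemma expi0 : expi (0 : R) = 1.
Proof. by rewrite /expi cos0 sin0 mulr0 addr0. Qed.

Lemma expiD (a b : R) : expi (a + b) = expi a * expi b.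
Proof.
have E t : expi t = (cos t) +i* (sin t) by rewrite /expi; simpc.
by rewrite !E cosD sinD; simpc; rewrite [sin a * _ + _]addrC.
Qed.

Lemma expop_proj (T : {set bits n}) (gamma : R) x y :
  expop (scaleop (- 'i * gamma%:C) (projT R T)) x y =
  if x == y then (if x \in T then expi (- gamma) else 1) else 0.
Proof.
rewrite (@expop_spec _ _ (fun b : bool => if b then - 'i * gamma%:C else - 'i * 0%:C)
   (fun b x y => if b then projT R T x y else idop R x y - projT R T x y)
   (fun b : bool => if b then expi (- gamma) else expi (- 0))).
- rewrite big_bool /= oppr0 expi0 mul1r /projT /idop.
  by case: (x == y); case: (x \in T); rewrite /= ?mulr1 ?mulr0 ?subr0 ?subrr ?addr0 ?add0r.
- move=> k x' y'; rewrite powop_proj; apply: eq_bigr => -[] _ //.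
  by rewrite rmorph0 mulr0.
- by move=> [] /=; apply: expi_cvg.
Qed.

Lemma ket0E (T : {set bits n}) (gamma : R) y :
  applyop (expop (scaleop (- 'i * gamma%:C) (projT R T))) (@plus_state R n) y =
  plus_state R y * (if y \in T then expi (- gamma) else 1).
Proof.
rewrite /applyop; under eq_bigr do rewrite expop_proj.
rewrite (bigD1 y) //= eqxx big1 ?addr0; first by rewrite mulrC.
by move=> z /negbTE zy; rewrite eq_sym zy mul0r.
Qed.

Lemma flipK (j : 'I_n) : involutive (flip j).
Proof. by move=> z; apply/ffunP => i; rewrite !ffunE; case: eqP => // _; rewrite negbK. Qed.

Definition sg (b : bool) : C := if b then -1 else 1.
Definition hh (b a c : bool) : C := 2%:R^-1 * sg (b && (a != c)).
Definition PX (s x y : bits n) : C := \prod_(j < n) hh (s j) (x j) (y j).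
Definition mu (s : bits n) : R := \sum_(j < n) (if s j then -1 else 1).

Lemma muE s : (mu s)%:C = \sum_(j < n) sg (s j).
Proof. by rewrite /mu rmorph_sum; apply: eq_bigr => j _; rewrite /sg; case: (s j); rewrite ?rmorphN1 ?rmorph1. Qed.

Lemma hh_flip b a c : hh b (~~ a) c = sg b * hh b a c.
Proof. rewrite /hh /sg; case: b; case: a; case: c => /=; ring. Qed.

Lemma PX_flip s j x y : PX s (flip j x) y = sg (s j) * PX s x y.
Proof.
rewrite /PX (bigD1 j) // [in RHS](bigD1 j) //.
rewrite [flip j x j]ffunE eqxx hh_flip /= -mulrA; congr (_ * (_ * _)).
by apply: eq_bigr => i ij; rewrite ffunE (negbTE ij).
Qed.
Lemma mulop_X (c : C) (B : op R n) x y :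
  mulop (scaleop c (@Xop R n)) B x y = c * \sum_(j < n) B (flip j x) y.
Proof.
rewrite /mulop /scaleop /Xop mulr_sumr.
under eq_bigr do rewrite mulr_sumr mulr_suml.
rewrite exchange_big; apply: eq_bigr => j _.
rewrite (bigD1 (flip j x)) // big1 ?addr0.
  by rewrite /sigmax flipK eqxx /= addr0 mulr1.
move=> z zn; rewrite /sigmax; case: eqP => [xE|]; last by rewrite mulr0 mul0r.
by move: zn; rewrite xE flipK eqxx.
Qed.

Lemma half2 : (2%:R^-1 : C) + 2%:R^-1 = 1.
Proof. by rewrite -(mulr2n (2%:R^-1 : C)) -(mulr_natl (2%:R^-1 : C) 2) mulfV // pnatr_eq0. Qed.

Lemma sum_hh a c : \sum_(b : bool) hh b a c = if a == c then 1 else 0.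
Proof.
rewrite big_bool /hh /sg; case: a; case: c => /=;
  by rewrite ?mulr1 ?half2 ?mulrN1 ?addNr.
Qed.
Lemma idop_PX x y : idop R x y = \sum_(s : bits n) PX s x y.
Proof.
rewrite /PX -(bigA_distr_bigA (fun j b => hh b (x j) (y j))) /=.
under eq_bigr do rewrite sum_hh.
rewrite /idop; case: eqP => [->|xy].
  by rewrite big1 // => j _; rewrite eqxx.
have [j xj] : exists j, x j != y j.
  apply/existsP; apply: contraNT (introN eqP xy) => /existsPn H.
  by apply/eqP/ffunP => j; apply/eqP; move: (H j); rewrite negbK.
by rewrite (bigD1 j) // (negbTE xj) /= mul0r.
Qed.
Lemma powop_X (c : C) k x y :
  powop (scaleop c (@Xop R n)) k x y =
  \sum_(s : bits n) (c * (mu s)%:C) ^+ k * PX s x y.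
Proof.
elim: k x y => [|k IH] x y.
  by rewrite /= idop_PX; apply: eq_bigr => s _; rewrite expr0 mul1r.
rewrite /powop /= -/(powop _ k) mulop_X.
under eq_bigr do rewrite IH.
rewrite exchange_big mulr_sumr; apply: eq_bigr => s _ /=.
under eq_bigr do rewrite PX_flip.
rewrite muE exprSr.
set M := (_ ^+ k).
transitivity (c * \sum_(i < n) sg (s i) * (M * PX s x y)).
  by congr (_ * _); apply: eq_bigr => i _; ring.
rewrite -mulr_suml; ring.
Qed.
Lemma expop_X (beta : R) x y :
  expop (scaleop (- 'i * beta%:C) (@Xop R n)) x y =
  \sum_(s : bits n) expi (- (beta * mu s)) * PX s x y.
Proof.
rewrite (@expop_spec _ _ (fun s => - 'i * (beta * mu s)%:C) PX
   (fun s => expi (- (beta * mu s)))) //.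
- move=> k x' y'; rewrite powop_X; apply: eq_bigr => s _.
  by rewrite rmorphM /= mulrA.
- by move=> s; apply: expi_cvg.
Qed.

Definition Ug (beta : R) (a c : bool) : C :=
  if a == c then (cos beta)%:C else - 'i * (sin beta)%:C.

Lemma sum_Ug (beta : R) a c :
  \sum_(b : bool) expi (- (beta * (if b then -1 else 1))) * hh b a c = Ug beta a c.
Proof.
rewrite big_bool /= /hh /sg /Ug mulrN1 mulr1 opprK /expi cosN sinN.
rewrite rmorphN.
case: a; case: c => /=.
- by transitivity ((cos beta)%:C * (2%:R^-1 + 2%:R^-1)); [ring | rewrite half2 mulr1].
- by transitivity (- 'i * (sin beta)%:C * (2%:R^-1 + 2%:R^-1)); [ring | rewrite half2 mulr1].
- by transitivity (- 'i * (sin beta)%:C * (2%:R^-1 + 2%:R^-1)); [ring | rewrite half2 mulr1].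
- by transitivity ((cos beta)%:C * (2%:R^-1 + 2%:R^-1)); [ring | rewrite half2 mulr1].
Qed.

Lemma expi_sum (I : finType) (F : I -> R) : expi (\sum_(i : I) F i) = \prod_(i : I) expi (F i).
Proof. exact: (big_morph _ expiD expi0). Qed.

Lemma U_prod (beta : R) x y :
  expop (scaleop (- 'i * beta%:C) (@Xop R n)) x y = \prod_(j < n) Ug beta (x j) (y j).
Proof.
rewrite expop_X.
under eq_bigr => s _ do rewrite /mu mulr_sumr -sumrN expi_sum /PX -big_split /=.
rewrite -(bigA_distr_bigA (fun j b => expi (- (beta * (if b then -1 else 1))) * hh b (x j) (y j))) /=.
by apply: eq_bigr => j _; rewrite sum_Ug.
Qed.

Lemma prod_Ug (beta : R) (x y : bits n) :
  \prod_(j < n) Ug beta (x j) (y j) = fn n beta (hamming x y).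
Proof.
rewrite (bigID (fun j => x j == y j)) /=.
rewrite (eq_bigr (fun _ => (cos beta)%:C)); last by move=> j; rewrite /Ug => ->.
rewrite [X in _ * X](eq_bigr (fun _ => - 'i * (sin beta)%:C)); last first.
  by move=> j /negbTE; rewrite /Ug => ->.
rewrite !prodr_const /fn.
have hd : #|(fun i : 'I_n => x i != y i)| = hamming x y.
  by rewrite /hamming; apply: eq_card => i; rewrite inE.
have hA := cardC (fun i : 'I_n => x i != y i).
rewrite card_ord in hA.
have hs : #|(fun i : 'I_n => ~~ x i (+) y i)| = #|[predC (fun i : 'I_n => x i != y i)]|.
  by apply: eq_card => i; rewrite !unfold_in /=; case: (x i); case: (y i).
have -> : (n - hamming x y)%N = #|[predC (fun i : 'I_n => x i != y i)]|.
  by rewrite -hd -[X in (X - _)%N]hA addKn.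
by rewrite hs hd.
Qed.
Lemma hamming_sym (z k : bits n) : hamming z k = hamming k z.
Proof. by rewrite /hamming; apply: eq_card => j; rewrite !inE eq_sym. Qed.

Lemma hamming_lt (x y : bits n) : (hamming x y < n.+1)%N.
Proof. by rewrite ltnS /hamming -[X in (_ <= X)%N](card_ord n) max_card. Qed.

Lemma sum_fn_all (beta : R) (x : bits n) :
  \sum_(y : bits n) fn n beta (hamming x y) =
  \sum_(d < n.+1) ('C(n, d))%:R * fn n beta d.
Proof.
under eq_bigr do rewrite -prod_Ug.
rewrite -(bigA_distr_bigA (fun j b => Ug beta (x j) b)) /=.
have -> : \prod_(j < n) \sum_(b : bool) Ug beta (x j) b =
   \prod_(j < n) ((cos beta)%:C + - 'i * (sin beta)%:C).
  apply: eq_bigr => j _; rewrite big_bool /Ug.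
  by case: (x j); rewrite /= // addrC.
rewrite prodr_const card_ord exprDn.
by apply: eq_bigr => d _; rewrite mulr_natl.
Qed.

Lemma sum_fn_T (T : {set bits n}) (beta : R) (x : bits n) :
  \sum_(y in T) fn n beta (hamming x y) =
  \sum_(d < n.+1) (ndist T x d)%:R * fn n beta d.
Proof.
rewrite (partition_big (fun y => Ordinal (hamming_lt x y)) predT) //=.
apply: eq_bigr => d _.
rewrite (eq_bigl (fun y => y \in [set z in T | hamming z x == d])); last first.
  by move=> y; rewrite !inE -val_eqE /= hamming_sym.
rewrite (eq_bigr (fun _ => fn n beta d)); last first.
  by move=> y; rewrite !inE => /andP[_ /eqP]; rewrite hamming_sym => ->.
by rewrite sumr_const mulr_natl.
Qed.
Lemma applyopE (A : op R n) v x : applyop A v x = \sum_(y : bits n) A x y * v y.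
Proof. by []. Qed.

Lemma ket1E (T : {set bits n}) (beta gamma : R) x :
  ket1 T beta gamma x = plus_state R x * ck T beta gamma x.
Proof.
rewrite /ket1 applyopE.
under eq_bigr do rewrite U_prod prod_Ug ket0E.
rewrite /plus_state.
set p := ((Num.sqrt _)^-1)%:C.
set e := expi (- gamma).
transitivity (p * (\sum_(y : bits n) fn n beta (hamming x y) +
                   \sum_(y in T) fn n beta (hamming x y) * (e - 1))).
  rewrite [\sum_(y in T) _]big_mkcond /= -big_split mulr_sumr.
  apply: eq_bigr => y _; case: (y \in T) => /=.
    by rewrite mulrBr mulr1 addrC subrK mulrCA.
  by rewrite mulr1 addr0 mulrC.
rewrite -mulr_suml sum_fn_T sum_fn_all /ck; congr (_ * _).
rewrite mulr_suml -big_split /=; apply: eq_bigr => d _; rewrite /e; ring.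
Qed.
Lemma normsq (z : C) : conjc z * z = `|z| ^+ 2.
Proof.
case: z => a b; rewrite normc_def /= -rmorphXn sqr_sqrtr ?addr_ge0 ?sqr_ge0 //.
by simpc; rewrite [a * b]mulrC subrr -!expr2.
Qed.

Lemma p2 : conjc (((Num.sqrt (2%:R ^+ n : R))^-1)%:C : C) * ((Num.sqrt (2%:R ^+ n : R))^-1)%:C
   = (2%:R ^+ n)^-1.
Proof.
rewrite conjc_real -rmorphM -expr2 exprVn sqr_sqrtr ?exprn_ge0 ?ler0n //.
by rewrite fmorphV rmorphXn rmorph_nat.
Qed.
End A.

Theorem lemma2 (R : realType) (n : nat) (T : {set bits n}) (beta gamma : R) :
  F1 T beta gamma =
  ((2%:R ^+ n)^-1 : R[i]) * \sum_(k in T) `|ck T beta gamma k| ^+ 2.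
Proof.
rewrite /F1.
transitivity (\sum_(x in T) conjc (ket1 T beta gamma x) * ket1 T beta gamma x).
  rewrite [RHS]big_mkcond; apply: eq_bigr => x _.
  rewrite (bigD1 x) // big1 /=.
    rewrite /projT eqxx /=; case: (x \in T); by rewrite ?mulr1 ?mulr0 ?mul0r ?addr0.
  by move=> y /negbTE yx; rewrite /projT eq_sym yx /= mulr0 mul0r.
rewrite mulr_sumr; apply: eq_bigr => x _.
rewrite ket1E /plus_state rmorphM /= mulrACA p2 normsq.
done.
Qed.
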